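(* Assume the pair $(\mathcal D,\mathcal F)$ is good. Then for every $\varepsilon\in(0,1)$, $\mathrm{RiskA}(\varepsilon)\le\Phi_*(\ln(2/\varepsilon))$. More precisely, for every $\delta>0$ there exist $\phi\in\mathcal F$ and $c\in\mathbb R$ such that the affine estimate $\hat g=\phi+c$ satisfies $\mathrm{Risk}(\hat g;\varepsilon)\le\Phi_*(\ln(2/\varepsilon))+\delta$.
   Context: Let $(\Omega,P)$ be a Polish space equipped with a $\sigma$-finite Borel measure $P$, let $\mathcal M\subset\mathbb R^m$, and let $\mathcal D=\{p_\mu\}_{\mu\in\mathcal M}$ be a parametric density family: for each $\mu\in\mathcal M$, $p_\mu$ is a nonnegative Borel function on $\Omega$ with $\int_\Omega p_\mu\,dP=1$. Let $\mathcal F$ be a finite-dimensional linear space of Borel functions on $\Omega$ containing the constants. The pair $(\mathcal D,\mathcal F)$ is called good if: (1) $\mathcal M$ is an open convex subset of $\mathbb R^m$; (2) $p_\mu(\omega)>0$ for all $\mu\in\mathcal M$, $\omega\in\Omega$; (3) for all $\mu,\nu\in\mathcal M$ the function $\omega\mapsto\ln(p_\mu(\omega)/p_\nu(\omega))$ belongs to $\mathcal F$; (4) for every $\phi\in\mathcal F$ the function $\mu\mapsto\ln\int_\Omega e^{\phi(\omega)}p_\mu(\omega)P(d\omega)$ is well defined (finite) and concave on $\mathcal M$. Let $X\subset\mathbb R^n$ be a nonempty convex compact set, $x\mapsto A(x)$ an affine map $\mathbb R^n\to\mathbb R^m$ with $A(X)\subset\mathcal M$, and $g\in\mathbb R^n$.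 An observation $\omega$ has density $p_{A(x)}$ w.r.t. $P$ for an unknown $x\in X$; the goal is to estimate $g^Tx$. An estimate is a Borel function $\hat g:\Omega\to\mathbb R$; it is called affine if $\hat g\in\mathcal F$. For $\varepsilon\in(0,1)$ the $\varepsilon$-risk of $\hat g$ is $\mathrm{Risk}(\hat g;\varepsilon)=\inf\{\delta:\ \sup_{x\in X}\mathrm{Prob}_{\omega\sim p_{A(x)}}\{|\hat g(\omega)-g^Tx|>\delta\}<\varepsilon\}$; $\mathrm{RiskA}(\varepsilon)=\inf_{\phi\in\mathcal F}\mathrm{Risk}(\phi;\varepsilon)$. For $r\ge0$, $x,y\in X$, $\phi\in\mathcal F$, $\alpha>0$ define $$\Phi_r(x,y;\phi,\alpha)=g^Tx-g^Ty+\alpha\ln\int_\Omega e^{\phi(\omega)/\alpha}p_{A(y)}(\omega)P(d\omega)+\alpha\ln\int_\Omega e^{-\phi(\omega)/\alpha}p_{A(x)}(\omega)P(d\omega)+2\alpha r,$$ and $\Phi_*(r)=\tfrac12\inf_{\phi\in\mathcal F,\alpha>0}\sup_{x,y\in X}\Phi_r(x,y;\phi,\alpha)$. *)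

(* Defs.v *)
From HB Require Import structures.
From mathcomp Require Import all_boot all_order all_algebra.
From mathcomp Require Import all_classical all_reals all_analysis.
Set Implicit Arguments. Unset Strict Implicit. Unset Printing Implicit Defensive.
Import Order.TTheory GRing.Theory Num.Theory.
Import numFieldNormedType.Exports.
Local Open Scope classical_set_scope.
Local Open Scope ring_scope.

Definition polish (R : realType) (T : completePseudoMetricType R) : Prop :=
  hausdorff_space T /\ exists D : set T, countable D /\ dense D.


Definition dotv (R : realType) (k : nat) (u v : 'rV[R]_k) : R :=
  \sum_(i < k) u ord0 i * v ord0 i.

Definition concave_on (R : realType) (k : nat) (S : set 'rV[R]_k)
  (f : 'rV[R]_k -> R) : Prop :=
  forall x y, S x -> S y -> forall t : R, 0 <= t -> t <= 1 ->
    t * f x + (1 - t) * f y <= f (t *: x + (1 - t) *: y).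

Section Setting.
Context (R : realType) (d : measure_display) (Omega : measurableType d)
  (P : {measure set Omega -> \bar R}).

Definition fin_dim_fun_space (F : set (Omega -> R)) : Prop :=
  [/\ (forall phi, F phi -> measurable_fun setT phi),
      (forall c : R, F (fun _ => c)),
      (forall phi psi, F phi -> F psi -> F (fun w => phi w + psi w)),
      (forall (a : R) phi, F phi -> F (fun w => a * phi w)) &
      exists (k : nat) (b : 'I_k -> Omega -> R),
        (forall i, F (b i)) /\
        forall phi, F phi -> exists c : 'I_k -> R,
          phi = fun w => \sum_(i < k) c i * b i w].

Definition density_family (m : nat) (M : set 'rV[R]_m)
  (p : 'rV[R]_m -> Omega -> R) : Prop :=
  forall mu, M mu ->
    [/\ measurable_fun setT (p mu), (forall w, 0 <= p mu w) &
        (\int[P]_w (p mu w)%:E = 1)%E].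

Definition expint (m : nat) (p : 'rV[R]_m -> Omega -> R) (phi : Omega -> R)
  (mu : 'rV[R]_m) : \bar R :=
  (\int[P]_w (expR (phi w) * p mu w)%:E)%E.

(* ln int e^{phi} p_mu dP (as a real number; meaningful when the integral
   is finite and positive, which goodness guarantees) *)
Definition lnexpint (m : nat) (p : 'rV[R]_m -> Omega -> R) (phi : Omega -> R)
  (mu : 'rV[R]_m) : R := ln (fine (expint p phi mu)).

Definition good_pair (m : nat) (M : set 'rV[R]_m) (p : 'rV[R]_m -> Omega -> R)
  (F : set (Omega -> R)) : Prop :=
  [/\ open M /\ convex_set M,
      (forall mu w, M mu -> 0 < p mu w),
      (forall mu nu, M mu -> M nu -> F (fun w => ln (p mu w / p nu w))) &
      (forall phi, F phi ->
         (forall mu, M mu -> (expint p phi mu < +oo)%E) /\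
         concave_on M (lnexpint p phi))].

Definition prob_p (m : nat) (p : 'rV[R]_m -> Omega -> R) (mu : 'rV[R]_m)
  (S : set Omega) : \bar R := (\int[P]_(w in S) (p mu w)%:E)%E.

Section Estimation.
Context (m n : nat) (p : 'rV[R]_m -> Omega -> R) (X : set 'rV[R]_n)
  (B : 'M[R]_(n, m)) (b : 'rV[R]_m) (g : 'rV[R]_n).

Definition Aff (x : 'rV[R]_n) : 'rV[R]_m := x *m B + b.

Definition Risk (ghat : Omega -> R) (eps : R) : \bar R :=
  ereal_inf [set delta%:E | delta in
    [set delta : R | (ereal_sup [set prob_p p (Aff x)
        [set w | (delta < `|ghat w - dotv g x|)%R] | x in X] < eps%:E)%E]].

Definition RiskA (F : set (Omega -> R)) (eps : R) : \bar R :=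
  ereal_inf [set Risk phi eps | phi in F].

Definition Phi_r (r : R) (x y : 'rV[R]_n) (phi : Omega -> R) (alpha : R) : R :=
  dotv g x - dotv g y
  + alpha * lnexpint p (fun w => phi w / alpha) (Aff y)
  + alpha * lnexpint p (fun w => - phi w / alpha) (Aff x)
  + 2 * alpha * r.

Definition Phi_sup (r : R) (phi : Omega -> R) (alpha : R) : \bar R :=
  ereal_sup [set (Phi_r r xy.1 xy.2 phi alpha)%:E
            | xy in [set xy : 'rV[R]_n * 'rV[R]_n | X xy.1 /\ X xy.2]].

Definition Phi_star (F : set (Omega -> R)) (r : R) : \bar R :=
  ((2^-1)%:E * ereal_inf
     [set Phi_sup r pa.1 pa.2
     | pa in [set pa : (Omega -> R) * R | F pa.1 /\ (0 < pa.2)%R]])%E.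
End Estimation.
End Setting.

(* Main.v *)
Require Import Defs.
From HB Require Import structures.
From mathcomp Require Import all_boot all_order all_algebra.
From mathcomp Require Import all_classical all_reals all_analysis.
From mathcomp Require Import measurable_realfun.
From mathcomp Require Import ring lra.
Import Order.TTheory GRing.Theory Num.Theory.
Import numFieldNormedType.Exports.
Local Open Scope classical_set_scope.
Local Open Scope ring_scope.

Section Helpers.
Context (R : realType) (d : measure_display) (Omega : measurableType d)
  (P : {measure set Omega -> \bar R}).

Lemma le_expR_ln (v : R) : 0 <= v -> v <= expR (ln v).
Proof.
rewrite le_eqVlt => /orP[/eqP<-|v0]; first by rewrite ln0 // expR0.
by rewrite lnK.
Qed.

Lemma tail_bound (m : nat) (p : 'rV[R]_m -> Omega -> R) (mu : 'rV[R]_m)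
  (psi : Omega -> R) (K : R) :
  measurable_fun setT (p mu) -> (forall w, 0 <= p mu w) ->
  measurable_fun setT psi -> (expint P p psi mu < +oo)%E ->
  (\int[P]_w (expR (psi w + K) * p mu w)%:E <=
     (expR (lnexpint P p psi mu + K))%:E)%E.
Proof.
move=> mp p0 mpsi fin.
have mE : measurable_fun setT (fun w => (expR (psi w) * p mu w)%:E).
  apply/measurable_EFinP; apply: measurable_funM => //.
  exact: (measurableT_comp (@measurable_expR R) mpsi).
under eq_integral do rewrite expRD mulrAC EFinM.
rewrite ge0_integralZr //; try by [move=> w _; rewrite lee_fin mulr_ge0 // expR_ge0 | rewrite lee_fin expR_ge0].
have e0 : (0 <= expint P p psi mu)%E.
  by apply: integral_ge0 => w _; rewrite lee_fin mulr_ge0 // expR_ge0.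
have ef : expint P p psi mu \is a fin_num by rewrite ge0_fin_numE.
rewrite -[X in (X * _)%E](fineK ef) -EFinM lee_fin expRD.
rewrite ler_wpM2r ?expR_ge0 //.
by rewrite /lnexpint; apply: le_expR_ln; apply: fine_ge0.
Qed.


Lemma core (m n : nat) (M : set 'rV[R]_m) (p : 'rV[R]_m -> Omega -> R)
  (X : set 'rV[R]_n) (B : 'M[R]_(n, m)) (b : 'rV[R]_m) (g : 'rV[R]_n)
  (phi : Omega -> R) (alpha S eps eta : R) (x0 : 'rV[R]_n) :
  density_family P M p ->
  measurable_fun setT phi ->
  (forall mu, M mu -> (expint P p (fun w => (phi w / alpha)%R) mu < +oo)%E) ->
  (forall mu, M mu -> (expint P p (fun w => (- phi w / alpha)%R) mu < +oo)%E) ->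
  (forall x, X x -> M (Aff B b x)) -> X x0 ->
  0 < alpha -> 0 < eps -> 0 < eta ->
  (forall x y, X x -> X y -> Phi_r P p B b g (ln (2 / eps)) x y phi alpha <= S) ->
  exists c : R, forall x, X x ->
    (prob_p P p (Aff B b x) [set w | (S / 2 + eta < `|phi w + c - dotv g x|)%R]
      <= (eps * expR (- (eta / alpha)))%:E)%E.
Proof.
move=> hD mphi fin1 fin2 hM Xx0 a0 e0 eta0 HS.
set r := ln (2 / eps).
set L1 := fun y => lnexpint P p (fun w => phi w / alpha) (Aff B b y).
set L2 := fun y => lnexpint P p (fun w => - phi w / alpha) (Aff B b y).
set a := fun y => - dotv g y + alpha * L1 y + alpha * r.
set bb := fun x => dotv g x + alpha * L2 x + alpha * r.
have Hab : forall x y, X x -> X y -> bb x + a y <= S.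
  move=> x y Xx Xy; have := HS x y Xx Xy.
  suff -> : Phi_r P p B b g r x y phi alpha = bb x + a y by [].
  rewrite /Phi_r /bb /a /L1 /L2; ring.
set E := [set a y | y in X].
have hs : has_sup E.
  split; first by exists (a x0); exists x0.
  exists (S - bb x0) => _ [y Xy <-]; have := Hab x0 y Xx0 Xy; lra.
set A := sup E.
have aA : forall y, X y -> a y <= A.
  by move=> y Xy; apply: sup_upper_bound => //; exists y.
have bA : forall x, X x -> bb x <= S - A.
  move=> x Xx; suff : A <= S - bb x by lra.
  apply: ge_sup; first by exists (a x0); exists x0.
  by move=> _ [y Xy <-]; have := Hab x y Xx Xy; lra.
exists (S / 2 - A) => x Xx.
have Mx := hM x Xx; have [mp p0 _] := hD _ Mx.
set c := S / 2 - A.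
set dl := S / 2 + eta.
set K1 := (c - dotv g x - dl) / alpha.
set K2 := (- c + dotv g x - dl) / alpha.
set G := fun w => ((expR (phi w / alpha + K1) * p (Aff B b x) w)
  + (expR (- phi w / alpha + K2) * p (Aff B b x) w))%:E.
set E1 := [set w | dl < `|phi w + c - dotv g x|].
have mE1 : measurable E1.
  have mh : measurable_fun setT (fun w => `|phi w + c - dotv g x|).
    apply: measurableT_comp => //.
    exact: (measurable_funB (measurable_funD mphi (measurable_cst c))
      (measurable_cst (dotv g x))).
  have := mh measurableT `]dl, +oo[%classic (measurable_itv _).
  by rewrite setTI preimage_itvoy.
have mG1 : measurable_fun setT (fun w => (expR (phi w / alpha + K1) * p (Aff B b x) w)%:E).
  apply/measurable_EFinP; apply: measurable_funM => //.
  apply: (measurableT_comp (@measurable_expR R)).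
  apply: measurable_funD => //; apply: measurable_funM => //.
have mG2 : measurable_fun setT (fun w => (expR (- phi w / alpha + K2) * p (Aff B b x) w)%:E).
  apply/measurable_EFinP; apply: measurable_funM => //.
  apply: (measurableT_comp (@measurable_expR R)).
  apply: measurable_funD => //; apply: measurable_funM => //.
  exact: measurable_funN.
have mG : measurable_fun setT G.
  by under [G]eq_fun do rewrite EFinD; apply: emeasurable_funD.
have key : forall w, E1 w ->
    1 <= expR (phi w / alpha + K1) + expR (- phi w / alpha + K2).
  move=> w; rewrite /E1 /= => hw.
  have ex1 : phi w / alpha + K1 = (phi w + c - dotv g x - dl) / alpha.
    by rewrite /K1 -mulrDl; congr (_ / _); ring.
  have ex2 : - phi w / alpha + K2 = (- (phi w + c - dotv g x) - dl) / alpha.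
    by rewrite /K2 -mulrDl; congr (_ / _); ring.
  rewrite ex1 ex2.
  case: (lerP 0 (phi w + c - dotv g x)) => ht.
  - rewrite ger0_norm // in hw.
    have h1 : 1 <= expR ((phi w + c - dotv g x - dl) / alpha).
      apply: le_trans (expR_ge1Dx _); rewrite lerDl divr_ge0 //; [lra|exact: ltW].
    by apply: le_trans h1 _; rewrite lerDl expR_ge0.
  - rewrite ltr0_norm // in hw.
    have h1 : 1 <= expR ((- (phi w + c - dotv g x) - dl) / alpha).
      apply: le_trans (expR_ge1Dx _); rewrite lerDl divr_ge0 //; [lra|exact: ltW].
    by apply: le_trans h1 _; rewrite lerDr expR_ge0.
have hL1 : L1 x + K1 <= - r - eta / alpha.
  rewrite -(ler_pM2r a0) mulrDl /K1 divfK ?gt_eqF // mulrDl mulNr.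
rewrite !mulNr divfK ?gt_eqF //.
  have := aA x Xx; rewrite /a /dl /c; lra.
have hL2 : L2 x + K2 <= - r - eta / alpha.
  rewrite -(ler_pM2r a0) mulrDl /K2 divfK ?gt_eqF // mulrDl !mulNr divfK ?gt_eqF //.
  have := bA x Xx; rewrite /bb /dl /c; lra.
have er : expR (- r) = eps / 2.
  by rewrite expRN lnK ?invf_div // posrE divr_gt0.
rewrite /prob_p.
apply: (@le_trans _ _ (\int[P]_(w in E1) G w)%E).
  apply: ge0_le_integral => //.
  - by move=> w _; rewrite lee_fin.
  - by apply: measurable_funTS; apply/measurable_EFinP.
  - exact: measurable_funTS.
  - move=> w E1w; rewrite /G lee_fin -mulrDl; apply: ler_peMl => //.
    exact: key.
apply: (@le_trans _ _ (\int[P]_w G w)%E).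
  apply: ge0_subset_integral => //.
  by move=> w _; rewrite lee_fin addr_ge0 // mulr_ge0 // expR_ge0.
rewrite /G; under eq_integral do rewrite EFinD.
rewrite ge0_integralD //; try by move=> w _; rewrite lee_fin mulr_ge0 // expR_ge0.
apply: le_trans.
  apply: leeD.
    exact: (@tail_bound m p (Aff B b x) (fun w => phi w / alpha) K1 mp p0
      (measurable_funM mphi (measurable_cst _)) (fin1 _ Mx)).
  exact: (@tail_bound m p (Aff B b x) (fun w => - phi w / alpha) K2 mp p0
      (measurable_funM (measurable_funN mphi) (measurable_cst _)) (fin2 _ Mx)).
rewrite -EFinD lee_fin.
have -> : eps * expR (- (eta / alpha)) =
  eps / 2 * expR (- (eta / alpha)) + eps / 2 * expR (- (eta / alpha)).
  by rewrite -mulrDl -splitr.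
rewrite -er -!expRD; apply: lerD; rewrite ler_expR.
- exact: hL1.
- exact: hL2.
Qed.


Lemma use_core (m n : nat) (M : set 'rV[R]_m) (p : 'rV[R]_m -> Omega -> R)
  (F : set (Omega -> R))
  (X : set 'rV[R]_n) (B : 'M[R]_(n, m)) (b : 'rV[R]_m) (g : 'rV[R]_n)
  (phi : Omega -> R) (alpha S eps eta : R) (x0 : 'rV[R]_n) :
  density_family P M p -> fin_dim_fun_space F -> good_pair P M p F ->
  F phi ->
  (forall x, X x -> M (Aff B b x)) -> X x0 ->
  0 < alpha -> 0 < eps -> eps < 1 -> 0 < eta ->
  (forall x y, X x -> X y -> Phi_r P p B b g (ln (2 / eps)) x y phi alpha <= S) ->
  exists c : R, 0 <= S / 2 + eta /\
    (Risk P p X B b g (fun w => (phi w + c)%R) eps <= (S / 2 + eta)%:E)%E.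
Proof.
move=> hD [mF cF aF sF _] [_ _ _ hgood] Fphi hM Xx0 a0 e0 e1 eta0 HS.
have F1 : F (fun w => phi w / alpha).
  have -> : (fun w => phi w / alpha) = (fun w => alpha^-1 * phi w).
    by apply/funext => w; rewrite mulrC.
  exact: sF.
have F2 : F (fun w => - phi w / alpha).
  have -> : (fun w => - phi w / alpha) = (fun w => (- alpha^-1) * phi w).
    by apply/funext => w; rewrite mulNr mulrC mulNr.
  exact: sF.
have [c Hc] := @core m n M p X B b g phi alpha S eps eta x0 hD (mF _ Fphi)
  (fun mu Mmu => (hgood _ F1).1 mu Mmu) (fun mu Mmu => (hgood _ F2).1 mu Mmu)
  hM Xx0 a0 e0 eta0 HS.
have elt : eps * expR (- (eta / alpha)) < eps.
  rewrite -[X in _ < X]mulr1 ltr_pM2l // expR_lt1 oppr_lt0 divr_gt0 //.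
exists c; split.
  rewrite leNgt; apply/negP => neg.
  have := Hc x0 Xx0.
  have -> : [set w | (S / 2 + eta < `|phi w + c - dotv g x0|)%R] = setT.
    by apply/seteqP; split => // w _ /=; apply: lt_le_trans neg _.
  rewrite /prob_p; have [_ _ ->] := hD _ (hM _ Xx0).
  rewrite lee_fin => h1.
  have := lt_trans (le_lt_trans h1 elt) e1; by rewrite ltxx.
apply: ereal_inf_lbound; exists (S / 2 + eta) => //=.
apply: (@le_lt_trans _ _ (eps * expR (- (eta / alpha)))%:E); last by rewrite lte_fin.
by apply: ge_ereal_sup => _ [x Xx <-]; exact: Hc.
Qed.

End Helpers.

Theorem lemma3p1 (R : realType) (T : completePseudoMetricType R)
  (P : {measure set (g_sigma_algebraType (@open T)) -> \bar R})
  (m n : nat) (M : set 'rV[R]_m)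
  (p : 'rV[R]_m -> g_sigma_algebraType (@open T) -> R)
  (F : set (g_sigma_algebraType (@open T) -> R))
  (X : set 'rV[R]_n) (B : 'M[R]_(n, m)) (b : 'rV[R]_m) (g : 'rV[R]_n) :
  polish T ->
  sigma_finite setT P ->
  density_family P M p ->
  fin_dim_fun_space F ->
  good_pair P M p F ->
  X !=set0 -> convex_set X -> compact X ->
  (forall x, X x -> M (Aff B b x)) ->
  forall eps : R, 0 < eps < 1 ->
    (RiskA P p X B b g F eps <= Phi_star P p X B b g F (ln (2 / eps)))%E /\
    (forall delta : R, 0 < delta ->
       exists phi, exists c : R, F phi /\
         (Risk P p X B b g (fun w => (phi w + c)%R) eps
            <= Phi_star P p X B b g F (ln (2 / eps)) + delta%:E)%E).
Proof.
move=> _ _ hD hF hG [x0 Xx0] _ _ hM eps /andP[e0 e1].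
have hF' := hF; case: hF' => [mF cF aF sF _].
pose I := ereal_inf [set Phi_sup P p X B b g (ln (2 / eps)) pa.1 pa.2
     | pa in [set pa : (g_sigma_algebraType (@open T) -> R) * R | F pa.1 /\ (0 < pa.2)%R]].
have PsE : Phi_star P p X B b g F (ln (2 / eps)) = ((2^-1)%:E * I)%E by [].
have Phi_le : forall phi alpha (S : R), F phi -> 0 < alpha ->
    (Phi_sup P p X B b g (ln (2 / eps)) phi alpha <= S%:E)%E ->
    forall x y, X x -> X y -> Phi_r P p B b g (ln (2 / eps)) x y phi alpha <= S.
  move=> phi alpha S _ _ hS x y Xx Xy; rewrite -lee_fin; apply: le_trans hS.
  by apply: ereal_sup_ubound; exists (x, y).
have part2 : forall delta : R, 0 < delta ->
       exists phi, exists c : R, F phi /\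
         (Risk P p X B b g (fun w => (phi w + c)%R) eps
            <= Phi_star P p X B b g F (ln (2 / eps)) + delta%:E)%E.
  move=> del del0; rewrite PsE.
  case hI : I => [i| |].
  - have : (I < (i + del)%:E)%E by rewrite hI lte_fin ltrDl.
    move=> /ereal_inf_lt [_ [[phi alpha] [/= Fphi a0] <-]] hlt.
    have HS := Phi_le phi alpha (i + del) Fphi a0 (ltW hlt).
    have [c [_ Hc]] := @use_core _ _ _ P m n M p F X B b g phi alpha (i + del) eps
      (del / 2) x0 hD hF hG Fphi hM Xx0 a0 e0 e1 (divr_gt0 del0 (ltr0Sn _ 1)) HS.
    exists phi, c; split => //; apply: le_trans Hc _.
    rewrite -EFinM -EFinD lee_fin; lra.
  - exists (fun _ => 0), 0; split => //.
    by rewrite mulry gtr0_sg ?invr_gt0 // mul1e addye // leey.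
  - exfalso.
    have : (I < (-1)%:E)%E by rewrite hI ltNyr.
    move=> /ereal_inf_lt [_ [[phi alpha] [/= Fphi a0] <-]] hlt.
    have HS := Phi_le phi alpha (-1) Fphi a0 (ltW hlt).
    have [c [H0 _]] := @use_core _ _ _ P m n M p F X B b g phi alpha (-1) eps
      (1 / 4) x0 hD hF hG Fphi hM Xx0 a0 e0 e1 (divr_gt0 ltr01 (ltr0Sn _ 3)) HS.
    move: H0; lra.
split => //.
apply/lee_addgt0Pr => del del0.
have [phi [c [Fphi H]]] := part2 del del0.
apply: le_trans H; apply: ereal_inf_lbound; exists (fun w => (phi w + c)%R) => //.
exact: (aF phi (fun _ => c) Fphi (cF c)).
Qed.
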